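(* Let $A$ be a finite subset of $\mathbb{R}^n$. The following are equivalent: (i) $A$ is a spectral set; (ii) there exists a continuous function $c:\mathbb{R}^n\to\mathbb{C}$ such that $c(a'-a)=\delta_{aa'}$ for all $a,a'\in A$ (Kronecker delta), $c(-t)=\overline{c(t)}$ for all $t\in\mathbb{R}^n$, and $c(u_1-u_2)=\sum_{a\in A}c(u_1+a)\overline{c(u_2+a)}$ for all $u_1,u_2\in\mathbb{R}^n$.
   Context: For $\lambda,x\in\mathbb{R}^n$ let $e_\lambda(x)=e^{2\pi i\lambda\cdot x}$. For a finite set $A\subset\mathbb{R}^n$ with $N=\#A$, let $\delta_A=\frac1N\sum_{a\in A}\delta_a$. $A$ is called spectral if there is $\Lambda\subset\mathbb{R}^n$ such that $\{e_\lambda|_A\}_{\lambda\in\Lambda}$ is an orthogonal basis of $L^2(\delta_A)$. *)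

(* Defs.v *)
From HB Require Import structures.
From mathcomp Require Import all_boot all_order all_algebra finmap.
From mathcomp Require Import all_classical all_reals all_analysis.
From mathcomp.real_closed Require Import complex.
Import numFieldNormedType.Exports.
Set Implicit Arguments. Unset Strict Implicit. Unset Printing Implicit Defensive.
Import Order.TTheory GRing.Theory Num.Theory.
Local Open Scope ring_scope.

(* The complex numbers over R, packed as a numClosedFieldType so that
   MathComp-Analysis equips them with their norm topology. *)
Definition CC (R : rcfType) : numClosedFieldType := R[i].

Definition dotv (R : realType) (n : nat) (l x : 'rV[R]_n) : R :=
  \sum_(i < n) l ord0 i * x ord0 i.

(* e_lambda(x) = exp(2 pi i lambda.x) = cos(2 pi lambda.x) + i sin(2 pi lambda.x) *)
Definition e_ (R : realType) (n : nat) (l : 'rV[R]_n) (x : 'rV[R]_n) : CC R :=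
  Complex (cos (2 * pi * dotv l x)) (sin (2 * pi * dotv l x)).

(* Inner product of L^2(delta_A), delta_A = (1/N) sum_{a in A} delta_a,
   functions on A being represented by functions on R^n (restricted to A). *)
Definition L2dot (R : realType) (n : nat) (A : {fset 'rV[R]_n})
  (f g : 'rV[R]_n -> CC R) : CC R :=
  (#|` A|%:R)^-1 * \sum_(a <- A) f a * (g a)^*.

(* A is spectral: there is Lambda in R^n such that {e_lambda|_A}_{lambda in Lambda}
   is an orthogonal basis of L^2(delta_A): the vectors are nonzero, pairwise
   orthogonal (for distinct indices), and span L^2(delta_A) (every function on A
   is a finite linear combination of them). *)
Definition spectral (R : realType) (n : nat) (A : {fset 'rV[R]_n}) : Prop :=
  exists Lambda : set 'rV[R]_n,
    (forall l, Lambda l -> L2dot A (e_ l) (e_ l) != 0) /\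
    (forall l l', Lambda l -> Lambda l' -> l != l' -> L2dot A (e_ l) (e_ l') = 0) /\
    (forall f : 'rV[R]_n -> CC R,
       exists (s : seq 'rV[R]_n) (coef : 'rV[R]_n -> CC R),
         (forall l, l \in s -> Lambda l) /\
         (forall a, a \in A -> f a = \sum_(l <- s) coef l * e_ l a)).

(* Main.v *)
Require Import Defs.
From HB Require Import structures.
From mathcomp Require Import all_boot all_order all_algebra finmap.
From mathcomp Require Import all_classical all_reals all_analysis.
From mathcomp.real_closed Require Import complex.
From mathcomp Require Import ring lra.
From mathcomp Require Import sesquilinear spectral.
Import numFieldNormedType.Exports.
Import Order.TTheory GRing.Theory Num.Theory.
Local Open Scope ring_scope.
Set Implicit Arguments. Unset Strict Implicit. Unset Printing Implicit Defensive.

Section E.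
Variable R : realType.
Variable n : nat.
Implicit Types (l x y : 'rV[R]_n).

Lemma dotvD l x y : dotv l (x + y) = dotv l x + dotv l y.
Proof. by rewrite /dotv -big_split; apply: eq_bigr => i _; rewrite mxE mulrDr. Qed.
Lemma dotvN l x : dotv l (- x) = - dotv l x.
Proof. by rewrite /dotv -sumrN; apply: eq_bigr => i _; rewrite mxE mulrN. Qed.
Lemma dotv0 l : dotv l 0 = 0.
Proof. by rewrite /dotv big1 // => i _; rewrite mxE mulr0. Qed.

Lemma eD l x y : e_ l (x + y) = e_ l x * e_ l y.
Proof.
rewrite /e_ dotvD mulrDr cosD sinD.
apply/eqP; rewrite eq_complex /=; apply/andP; split; apply/eqP; lra.
Qed.
Lemma eN l x : e_ l (- x) = (e_ l x)^*.
Proof. by rewrite /e_ dotvN mulrN cosN sinN. Qed.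
Lemma e0 l : e_ l 0 = 1.
Proof. by rewrite /e_ dotv0 mulr0 cos0 sin0. Qed.
Lemma eJ l x : e_ l x * (e_ l x)^* = 1.
Proof. by rewrite -eN -eD subrr e0. Qed.
Lemma eB l x y : e_ l (x - y) = e_ l x * (e_ l y)^*.
Proof. by rewrite eD eN. Qed.
End E.

Section Cont.
Variable R : realType.

Lemma continuous_RC : continuous (fun x : R => (x%:C)%C : CC R).
Proof.
move=> y; apply/cvgrPdist_lt => eps eps0.
have : 0 < complex.Re eps by move: eps0; rewrite ltcE => /andP[].
move=> he; have : \forall x \near y, `|y - x| < complex.Re eps.
  by apply: (@cvgr_dist_lt _ R _ (nbhs y) _ (fun x => x)) => //; exact: cvg_id.
apply: filterS => x hx.
have -> : (y%:C - x%:C)%C = ((y - x)%:C)%C :> CC R by rewrite rmorphB.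
rewrite normc_def /= expr0n /= addr0 sqrtr_sqr ltcE /=.
move: eps0; rewrite ltcE => /andP[/eqP -> _]; rewrite eqxx /=; exact: hx.
Qed.

Lemma continuous_sumf (T : topologicalType) (I : Type) (r : seq I)
   (f : I -> T -> CC R) :
  (forall i, continuous (f i)) -> continuous (fun x => \sum_(i <- r) f i x).
Proof.
move=> hf; elim: r => [|i r IH].
  under eq_fun do rewrite big_nil; exact: cst_continuous.
under eq_fun do rewrite big_cons.
by move=> x; apply: continuousD; [apply: hf | apply: IH].
Qed.

Lemma continuous_sumfR (T : topologicalType) (I : Type) (r : seq I)
   (f : I -> T -> R) :
  (forall i, continuous (f i)) -> continuous (fun x => \sum_(i <- r) f i x).
Proof.
move=> hf; elim: r => [|i r IH].
  under eq_fun do rewrite big_nil; exact: cst_continuous.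
under eq_fun do rewrite big_cons.
by move=> x; apply: continuousD; [apply: hf | apply: IH].
Qed.

Lemma continuous_Complex (T : topologicalType) (f g : T -> R) :
  continuous f -> continuous g ->
  continuous (fun x => (Complex (f x) (g x) : CC R)).
Proof.
move=> hf hg.
have -> : (fun x => (Complex (f x) (g x) : CC R)) =
   (fun x => ((f x)%:C)%C + (Complex 0 1 : CC R) * ((g x)%:C)%C).
  apply: funext => x; apply/eqP; rewrite eq_complex /=; apply/andP; split;
  apply/eqP; lra.
move=> x; apply: cvgD.
  apply: continuous_comp; [exact: hf | exact: continuous_RC].
apply: cvgM; first exact: cvg_cst.
apply: continuous_comp; [exact: hg | exact: continuous_RC].
Qed.

Variable n : nat.
Lemma continuous_dotv (l : 'rV[R]_n) : continuous (dotv l).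
Proof.
rewrite /dotv; apply: (@continuous_sumfR 'rV[R]_n _ (index_enum 'I_n) (fun i x => l ord0 i * x ord0 i)) => i x.
have h1 := (@coord_continuous R 1 n ord0 i x).
have h2 := (@cst_continuous 'rV[R]_n R (l ord0 i) x).
exact: (continuousM h2 h1).
Qed.

Lemma continuous_e (l : 'rV[R]_n) : continuous (e_ l).
Proof.
have hd : continuous (fun x => 2 * pi * dotv l x).
  move=> x; have h2 := (@cst_continuous 'rV[R]_n R (2 * pi) x).
  have h1 : {for x, continuous (dotv l)} := @continuous_dotv l x.
  exact: (continuousM h2 h1).
rewrite /e_; apply: continuous_Complex => x.
- apply: continuous_comp; [exact: hd | exact: continuous_cos].
- apply: continuous_comp; [exact: hd | exact: continuous_sin].
Qed.
End Cont.

Section Char1.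
Variable R : realType.
Definition cis (t : R) : CC R := Complex (cos t) (sin t).
Lemma cisD a b : cis (a + b) = cis a * cis b.
Proof.
rewrite /cis cosD sinD.
apply/eqP; rewrite eq_complex /=; apply/andP; split; apply/eqP; lra.
Qed.
Lemma cis0 : cis 0 = 1.
Proof. by rewrite /cis cos0 sin0. Qed.

Lemma continuous_cis (k : R) : continuous (fun x => cis (k * x)).
Proof.
have hk : continuous (fun x : R => k * x).
  move=> x; have h2 := (@cst_continuous R R k x).
  have h1 : {for x, continuous (fun y : R => y)} by exact: cvg_id.
  exact: (continuousM h2 h1).
rewrite /cis; apply: continuous_Complex => x.
- apply: continuous_comp; [exact: hk | exact: continuous_cos].
- apply: continuous_comp; [exact: hk | exact: continuous_sin].
Qed.

Lemma sqr_eq_Re (w1 w2 : CC R) : w1 ^+ 2 = w2 ^+ 2 ->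
  0 < complex.Re w1 -> 0 < complex.Re w2 -> w1 = w2.
Proof.
move=> h r1 r2; have : (w1 - w2) * (w1 + w2) = 0.
  by rewrite mulrDr !mulrBl -!expr2 h (mulrC w2 w1); ring.
move/eqP; rewrite mulf_eq0 => /orP[]; first by rewrite subr_eq0 => /eqP.
rewrite addr_eq0 => /eqP h2; move: r1; rewrite h2.
case: w2 r2 {h h2} => a b /= ha hb.
exfalso; lra.
Qed.

Lemma arg_exists (z : CC R) : complex.Re z ^+ 2 + complex.Im z ^+ 2 = 1 ->
  0 < complex.Re z -> exists t, - (pi / 2) < t < pi / 2 /\ z = cis t.
Proof.
case: z => a b /= hab ha.
set r := b / a; exists (atan r); split; first by have [] := atan_def r.
have hc : cos (atan r) = a.
  rewrite cos_atan.
  have -> : 1 + r ^+ 2 = a^-1 ^+ 2.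
    have ha2 : a ^+ 2 != 0 by rewrite sqrf_eq0 gt_eqF.
    have -> : 1 + r ^+ 2 = (a ^+ 2 + b ^+ 2) / a ^+ 2.
      by rewrite /r; field; rewrite gt_eqF.
    by rewrite hab exprVn mul1r.
  by rewrite sqrtr_sqr ger0_norm ?invr_ge0 ?ltW // invrK.
have hs : sin (atan r) = b.
  have [_ ht] := atan_def r.
  move: ht; rewrite /tan hc => ht.
  have : sin (atan r) = r * a by rewrite -[in RHS]ht divfK ?gt_eqF.
  by rewrite /r divfK ?gt_eqF.
by rewrite /cis hc hs.
Qed.
End Char1.

Section Char1b.
Variable R : realType.

Lemma normC_lt1_Re (w : CC R) : `|1 - w| < 1 -> 0 < complex.Re w.
Proof.
case: w => a b; rewrite normc_def ltcE /= => /andP[_].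
rewrite -[X in _ < X]sqrtr1 ltr_sqrt ?ltr01 // => h.
have : (1 - a) ^+ 2 < 1 by rewrite expr2; nra.
by rewrite expr2 => h2; nra.
Qed.

Lemma char1 (phi : R -> CC R) : continuous phi ->
  (forall x y, phi (x + y) = phi x * phi y) ->
  (forall x, phi x * (phi x)^* = 1) ->
  exists k, forall x, phi x = cis (k * x).
Proof.
move=> hc hD hJ.
have hRI x : complex.Re (phi x) ^+ 2 + complex.Im (phi x) ^+ 2 = 1.
  have := hJ x; case: (phi x) => a b /eqP; rewrite eq_complex /= => /andP[/eqP h _].
  by rewrite !expr2; lra.
have h0 : phi 0 = 1.
  have h := hD 0 0; rewrite addr0 in h.
  have hn : phi 0 != 0 by apply/eqP => h0; have := hJ 0; rewrite h0 mul0r => /eqP; rewrite eq_sym oner_eq0.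
  by apply: (mulfI hn); rewrite mulr1 -h.
have [del del0 hdel] : exists2 del : R, 0 < del & forall x, `|x| < del -> 0 < complex.Re (phi x).
  have := hc 0; move/cvgrPdist_lt => /(_ 1 ltr01) /nbhs_ballP [e e0 he].
  exists e => // x hx; apply: normC_lt1_Re; rewrite -{1}h0; apply: he.
  by rewrite /ball /= sub0r normrN.
set d := del / 2.
have d0 : 0 < d by rewrite /d divr_gt0.
have hd k : `|d / 2 ^+ k| < del.
  rewrite ger0_norm ?divr_ge0 ?ltW ?exprn_gt0 //.
  apply: (le_lt_trans (y := d)); last by rewrite /d; lra.
  have h2 : (1 : R) <= 2 ^+ k by apply: exprn_ege1; lra.
  rewrite ler_pdivrMr ?exprn_gt0 //; nra.
have hd0 : 0 < complex.Re (phi d) by have := hdel _ (hd 0%N); rewrite expr0 divr1.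
have [t0 [ht0 hz]] := arg_exists (hRI d) hd0.
set k := t0 / d.
exists k.
set P := fun y => phi y = cis (k * y).
have Pdy m : P (d / 2 ^+ m).
  elim: m => [|m IH].
    by rewrite /P expr0 divr1 /k divfK ?gt_eqF.
  have hy : d / 2 ^+ m = d / 2 ^+ m.+1 + d / 2 ^+ m.+1.
    by rewrite exprS; field; rewrite ?pnatr_eq0 // expf_neq0 // pnatr_eq0.
  apply: sqr_eq_Re.
  - by move: IH; rewrite /P hy mulrDr hD cisD !expr2.
  - by apply: hdel; exact: hd.
  - rewrite /cis /=; apply: cos_gt0_pihalf.
    rewrite -ltr_norml /k mulrA divfK ?gt_eqF //.
    have e2 : `|(2 : R) ^+ m.+1| = 2 ^+ m.+1 by rewrite ger0_norm // exprn_ge0.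
    rewrite normrM normfV e2.
    apply: (le_lt_trans (y := `|t0|)); last by rewrite ltr_norml.
    have h2 : (1 : R) <= 2 ^+ m.+1 by apply: exprn_ege1; lra.
    have := normr_ge0 t0.
    have := ler_norm t0.
    rewrite ler_pdivrMr ?exprn_gt0 //; nra.
have PD a b : P a -> P b -> P (a + b) by rewrite /P hD mulrDr cisD => -> ->.
have PN a : P a -> P (- a).
  rewrite /P => ha.
  have e1 : cis (k * a) * cis (k * - a) = 1 by rewrite -cisD mulrN subrr cis0.
  by rewrite -[LHS]mulr1 -e1 mulrA -ha -hD addNr h0 mul1r.
have Pn a (j0 : nat) : P a -> P (j0%:R * a).
  move=> ha; elim: j0 => [|j IHj]; first by rewrite mul0r /P mulr0 h0 cis0.
  by rewrite -addn1 natrD mulrDl mul1r; apply: PD.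
have Pz a (z : int) : P a -> P (z%:~R * a).
  move=> ha; case: z => j; first exact: Pn.
  by rewrite NegzE mulrNz mulNr; apply: PN; exact: Pn.
(* density *)
move=> x; apply/eqP; rewrite -subr_eq0; apply/negPn/negP => hne.
set h := fun y => phi y - cis (k * y).
have hcx : {for x, continuous h}.
  have h1 := hc x.
  have h2 : {for x, continuous (fun y => cis (k * y))} := @continuous_cis R k x.
  exact: (continuousB h1 h2).
have hx0 : 0 < `|h x| by rewrite normr_gt0.
have := hcx; move/cvgrPdist_lt => /(_ _ hx0) /nbhs_ballP [e e0 he].
pose K := Num.Def.archi_bound (d / e).
have hK : d / e < 2 ^+ K by apply: upper_nthrootP.
set s := d / 2 ^+ K.
have s0 : 0 < s by rewrite divr_gt0 ?exprn_gt0.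
have se : s < e.
  by rewrite /s ltr_pdivrMr ?exprn_gt0 // mulrC -ltr_pdivrMr.
pose m := Num.Def.floor (x / s).
have /andP [hm1 hm2] := floor_itv (x / s).
have hm1' : m%:~R * s <= x by move: hm1; rewrite -/m ler_pdivlMr.
have hm2' : x < m%:~R * s + s.
  by move: hm2; rewrite -/m ltr_pdivrMr // intrD mulrDl mul1r.
have hy : P (m%:~R * s) by apply: Pz; exact: Pdy.
have : `|h x - h (m%:~R * s)| < `|h x|.
  apply: he; rewrite /ball /=.
  rewrite ger0_norm; lra.
by rewrite /h hy subrr subr0 /= ltxx.
Qed.
End Char1b.

Section CharN.
Variable R : realType.
Variable n : nat.

Lemma dotv_delta (l : 'rV[R]_n) (x : R) (i : 'I_n) :
  dotv l (x *: delta_mx 0 i) = l ord0 i * x.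
Proof.
rewrite /dotv (bigD1 i) //= big1 ?addr0.
  by rewrite !mxE eqxx /= mulr1.
by move=> j hj; rewrite !mxE eqxx /= (negbTE hj) mulr0 mulr0.
Qed.

Lemma charN (chi : 'rV[R]_n -> CC R) : continuous chi ->
  (forall s t, chi (s + t) = chi s * chi t) ->
  (forall t, chi t * (chi t)^* = 1) ->
  exists l, forall t, chi t = e_ l t.
Proof.
move=> hc hD hJ.
have h0 : chi 0 = 1.
  have h := hD 0 0; rewrite addr0 in h.
  have hn : chi 0 != 0 by apply/eqP => h0; have := hJ 0; rewrite h0 mul0r => /eqP; rewrite eq_sym oner_eq0.
  by apply: (mulfI hn); rewrite mulr1 -h.
have hk i : exists k, forall x, chi (x *: delta_mx 0 i) = cis (k * x).
  apply: char1.
  - move=> x; apply: continuous_comp; last exact: hc.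
    have h1 : {for x, continuous (fun y : R => y)} by exact: cvg_id.
    exact: (@continuousZr_tmp R _ R (fun y : R => y) (delta_mx 0 i : 'rV[R]_n) x h1).
  - by move=> x y; rewrite scalerDl hD.
  - by move=> x; apply: hJ.
have [k hkP] := boolp.choice hk.
exists (\row_i (k i / (2 * pi))) => t.
have pi0 : (2 * pi : R) != 0 by apply/eqP; have := @pi_gt0 R; lra.
rewrite [t]row_sum_delta.
have -> : chi (\sum_(j < n) t 0 j *: 'e_j) = \prod_(j < n) chi (t 0 j *: 'e_j).
  by apply: (big_morph chi hD h0).
have -> : e_ (\row_i (k i / (2 * pi))) (\sum_(j < n) t 0 j *: 'e_j) =
    \prod_(j < n) e_ (\row_i (k i / (2 * pi))) (t 0 j *: 'e_j).
  by apply: (big_morph _ (@eD _ _ _) (@e0 _ _ _)).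
apply: eq_bigr => j _.
rewrite hkP /e_ dotv_delta mxE /cis.
by rewrite mulrA [_ * (k j / _)]mulrC mulfVK.
Qed.
End CharN.

Section Dir1.
Variable R : realType.
Variable n : nat.
Variable A : {fset 'rV[R]_n}.
Local Notation N := #|` A|.

Lemma sum_pick (S : seq 'rV[R]_n) (g : 'rV[R]_n -> CC R) l :
  uniq S -> l \in S -> \sum_(m <- S) (l == m)%:R * g m = g l.
Proof.
move=> hu hl; rewrite (bigD1_seq l) //= eqxx mul1r big1 ?addr0 // => m hm.
by rewrite eq_sym (negbTE hm) mul0r.
Qed.

Lemma contcM' (T : topologicalType) (f : T -> CC R) (k : CC R) :
  continuous f -> continuous (fun t => k * f t).
Proof.
move=> hf t; have h2 := @cst_continuous T (CC R) k t.
have h1 := hf t; exact: (continuousM h2 h1).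
Qed.

Lemma dir1_empty : N = 0%N ->
  exists c : 'rV[R]_n -> CC R,
    continuous c /\
    (forall a a', a \in A -> a' \in A -> c (a' - a) = (a == a')%:R) /\
    (forall t, c (- t) = (c t)^*) /\
    (forall u1 u2, c (u1 - u2) = \sum_(a <- A) c (u1 + a) * (c (u2 + a))^*).
Proof.
move=> /size0nil hA; exists (fun=> 0); split; [|split; [|split]].
- exact: cst_continuous.
- by move=> a a'; rewrite -[a \in A]/(a \in enum_fset A) hA in_nil.
- by move=> t; rewrite conjC0.
- by move=> u1 u2; rewrite hA big_nil.
Qed.

Lemma dir1 : spectral A ->
  exists c : 'rV[R]_n -> CC R,
    continuous c /\
    (forall a a', a \in A -> a' \in A -> c (a' - a) = (a == a')%:R) /\
    (forall t, c (- t) = (c t)^*) /\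
    (forall u1 u2, c (u1 - u2) = \sum_(a <- A) c (u1 + a) * (c (u2 + a))^*).
Proof.
move=> [Lam [h1 [h2 h3]]].
have [N0|N0] := eqVneq N 0%N; first exact: dir1_empty.
have NC : (N%:R : CC R) != 0 by rewrite pnatr_eq0.
have hf : forall b : 'rV[R]_n, exists p : seq 'rV[R]_n * ('rV[R]_n -> CC R),
    (forall l, l \in p.1 -> Lam l) /\
    (forall a, a \in A -> (a == b)%:R = \sum_(l <- p.1) p.2 l * e_ l a).
  move=> b; have [s [cf [k1 k2]]] := h3 (fun x => (x == b)%:R).
  by exists (s, cf).
have [p hp] := boolp.choice hf.
pose S := undup (flatten [seq (p b).1 | b <- enum_fset A]).
have Su : uniq S by exact: undup_uniq.
have SL l : l \in S -> Lam l.
  rewrite mem_undup => /flattenP [s /mapP [b _ ->]].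
  by apply: (proj1 (hp b)).
have Ssub b l : b \in A -> l \in (p b).1 -> l \in S.
  move=> hb hl; rewrite mem_undup; apply/flattenP; exists (p b).1 => //.
  by apply/mapP; exists b.
pose G l m := \sum_(a <- A) e_ l a * (e_ m a)^*.
have GE l m : Lam l -> Lam m -> G l m = N%:R * (l == m)%:R.
  move=> hl hm; case: eqP => [->|/eqP hlm].
    rewrite mulr1 /G (eq_bigr (fun=> 1)); last by move=> a _; rewrite eJ.
    by rewrite (big_nth 0) big_mkord sumr_const card_ord.
  have := h2 l m hl hm hlm; rewrite /L2dot => /eqP.
  by rewrite mulf_eq0 invr_eq0 (negbTE NC) /= /G => /eqP ->; rewrite mulr0.
have repro b a' : b \in A -> a' \in A ->
    (a' == b)%:R = (N%:R)^-1 * \sum_(m <- S) e_ m a' * (e_ m b)^*.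
  move=> hb ha'.
  have [hpl hps] := hp b.
  pose C m := \sum_(l <- (p b).1) (l == m)%:R * (p b).2 l.
  have hC m : m \in S -> (e_ m b)^* = N%:R * C m.
    move=> hm.
    transitivity (\sum_(a <- A) (a == b)%:R * (e_ m a)^*).
      rewrite (bigD1_seq b) ?fset_uniq //= eqxx mul1r big1 ?addr0 // => a hab.
      by rewrite (negbTE hab) mul0r.
    rewrite (eq_big_seq (fun a => \sum_(l <- (p b).1) (p b).2 l * (e_ l a * (e_ m a)^*))); last first.
      by move=> a ha; rewrite (hps a ha) mulr_suml; apply: eq_bigr => l _; rewrite mulrA.
    rewrite exchange_big /= /C mulr_sumr; apply: eq_big_seq => l hl.
    rewrite -mulr_sumr -/(G l m) GE; [ring | exact: hpl | exact: SL].
  rewrite (hps a' ha').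
  rewrite (eq_big_seq (fun l => \sum_(m <- S) (l == m)%:R * ((p b).2 l * e_ m a'))); last first.
    by move=> l hl; rewrite sum_pick // (Ssub b).
  rewrite exchange_big /= mulr_sumr; apply: eq_big_seq => m hm.
  rewrite hC // mulrCA mulKf // /C mulr_sumr.
  by apply: eq_bigr => l _; ring.
have cJ : (N%:R^-1 : CC R)^* = N%:R^-1 by rewrite fmorphV rmorph_nat.
exists (fun t => (N%:R)^-1 * \sum_(l <- S) e_ l t); split; [|split; [|split]].
- apply: contcM'; apply: continuous_sumf => l; exact: continuous_e.
- by move=> a a' ha ha'; rewrite eq_sym (repro a a') //; congr (_ * _); apply: eq_bigr => l _; rewrite eB.
- move=> t; rewrite rmorphM fmorphV rmorph_nat rmorph_sum; congr (_ * _).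
  by apply: eq_bigr => l _; rewrite eN.
- move=> u1 u2.
  rewrite [RHS](eq_bigr (fun a => N%:R^-1 * N%:R^-1 * \sum_(l <- S) \sum_(m <- S)
      (e_ l u1 * (e_ m u2)^*) * (e_ l a * (e_ m a)^*))); last first.
    move=> a _; rewrite rmorphM fmorphV rmorph_nat rmorph_sum mulrACA mulr_suml; congr (_ * _).
    apply: eq_bigr => l _; rewrite mulr_sumr; apply: eq_bigr => m _.
    rewrite !eD rmorphM; ring.
  have H : \sum_(a <- A) \sum_(l <- S) \sum_(m <- S)
      (e_ l u1 * (e_ m u2)^*) * (e_ l a * (e_ m a)^*) = N%:R * \sum_(l <- S) e_ l (u1 - u2).
    rewrite exchange_big /= mulr_sumr; apply: eq_big_seq => l hl.
    rewrite exchange_big /=.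
    rewrite (eq_big_seq (fun m => (e_ l u1 * (e_ m u2)^*) * (N%:R * (l == m)%:R))); last first.
      by move=> m hm; rewrite -mulr_sumr -/(G l m) (GE _ _ (SL _ hl) (SL _ hm)).
    transitivity (\sum_(m <- S) (l == m)%:R * (N%:R * (e_ l u1 * (e_ m u2)^*))).
      by apply: eq_bigr => m _; ring.
    by rewrite sum_pick // eB.
  rewrite -mulr_sumr H mulrA -[N%:R^-1 * N%:R^-1 * N%:R]mulrA mulVf // mulr1.
  reflexivity.
Qed.
End Dir1.

Section Dir2.
Variable R : realType.
Variable n : nat.
Variable A : {fset 'rV[R]_n}.
Variable c : 'rV[R]_n -> CC R.
Hypothesis hcont : continuous c.
Hypothesis hA : forall a a', a \in A -> a' \in A -> c (a' - a) = (a == a')%:R.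
Hypothesis hN : forall t, c (- t) = (c t)^*.
Hypothesis hI : forall u1 u2, c (u1 - u2) = \sum_(a <- A) c (u1 + a) * (c (u2 + a))^*.

Local Notation N := #|` A|.
Definition at_ (i : 'I_N) : 'rV[R]_n := nth 0 (enum_fset A) i.

Lemma at_in i : at_ i \in A.
Proof. by rewrite /at_ mem_nth. Qed.

Lemma at_inj : injective at_.
Proof.
move=> i j; rewrite /at_ => /eqP; rewrite nth_uniq ?fset_uniq // => /eqP.
exact: val_inj.
Qed.

Lemma sumA (F : 'rV[R]_n -> CC R) : \sum_(a <- A) F a = \sum_(i < N) F (at_ i).
Proof. by rewrite (big_nth 0) big_mkord. Qed.

Lemma c_at i j : c (at_ j - at_ i) = (i == j)%:R.
Proof.
rewrite hA ?at_in //; congr (_%:R).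
by rewrite (inj_eq at_inj).
Qed.

Lemma hI2 x y : \sum_(i < N) c (x + at_ i) * c (y - at_ i) = c (x + y).
Proof.
have := hI x (- y); rewrite opprK => ->.
rewrite sumA; apply: eq_bigr => i _; congr (_ * _).
by rewrite -hN opprD opprK addrC.
Qed.

Definition M (t : 'rV[R]_n) : 'M[CC R]_N := \matrix_(i, j) c (t + at_ j - at_ i).

Lemma MD s t : M (s + t) = M s *m M t.
Proof.
apply/matrixP => i j; rewrite !mxE.
rewrite (eq_bigr (fun k => c ((s - at_ i) + at_ k) * c ((t + at_ j) - at_ k))); last first.
  by move=> k _; rewrite !mxE addrAC.
by rewrite hI2; congr c; rewrite addrAC -!addrA; congr (_ + _); rewrite addrCA.
Qed.

Lemma Msum t : M t = \sum_(k < N) c (t + at_ k) *: M (- at_ k).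
Proof.
apply/matrixP => i j; rewrite !mxE summxE.
rewrite -[X in c X](addrA t) -hI2.
by apply: eq_bigr => k _; rewrite !mxE addrAC [- at_ k + _]addrC.
Qed.

Lemma MJ t : map_mx Num.conj (M t)^T = M (- t).
Proof.
apply/matrixP => i j; rewrite !mxE -hN; congr c.
by rewrite opprB opprD addrA [at_ j - t]addrC.
Qed.

Lemma M0 : M 0 = 1%:M.
Proof. by apply/matrixP => i j; rewrite !mxE add0r c_at. Qed.


Lemma Mcomm s t : comm_mx (M s) (M t).
Proof. by rewrite /comm_mx -!MD addrC. Qed.

Local Notation ct X := (map_mx Num.conj (trmx X)).

Lemma exP : exists2 P : 'M[CC R]_N, P *m ct P = 1%:M &
  forall t (i j : 'I_N), (i < j)%N -> (P *m M t *m ct P) i j = 0.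
Proof.
have hc : {in [seq M (- at_ k) | k <- enum 'I_N] &, forall A B, comm_mx A B}.
  by move=> X Y /mapP [k _ ->] /mapP [l _ ->]; apply: Mcomm.
have [P Pu /allP hP] := @cotrigonalization _ N _ hc.
exists P; first exact/unitarymxP.
move=> t i j hij.
rewrite Msum mulmx_sumr mulmx_suml summxE big1 // => k _.
rewrite -scalemxAr -scalemxAl mxE.
have := hP (M (- at_ k)) (map_f _ (mem_enum _ k)).
rewrite /= /similar_to /conjmx pinvmx_unitary // => /is_trig_mxP -> //.
by rewrite mulr0.
Qed.


Lemma ccont (v : 'rV[R]_n) : continuous (fun t : 'rV[R]_n => c (t + v)).
Proof.
move=> t; apply: continuous_comp; last exact: hcont.
have h1 : {for t, continuous (fun y : 'rV[R]_n => y)} by exact: cvg_id.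
have h2 := @cst_continuous 'rV[R]_n 'rV[R]_n v t.
exact: (continuousD h1 h2).
Qed.

Lemma contMc (f : 'rV[R]_n -> CC R) (k : CC R) :
  continuous f -> continuous (fun t => f t * k).
Proof.
move=> hf t; have h2 := @cst_continuous 'rV[R]_n (CC R) k t.
have h1 := hf t; exact: (continuousM h1 h2).
Qed.
Lemma contcM (f : 'rV[R]_n -> CC R) (k : CC R) :
  continuous f -> continuous (fun t => k * f t).
Proof.
move=> hf t; have h2 := @cst_continuous 'rV[R]_n (CC R) k t.
have h1 := hf t; exact: (continuousM h2 h1).
Qed.

Lemma key2 : exists2 P : 'M[CC R]_N, P *m ct P = 1%:M &
  exists lam : 'I_N -> 'rV[R]_n,
    forall j i i', P j i = e_ (lam j) (at_ i - at_ i') * P j i'.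
Proof.
have [P Pu Ptrig] := exP.
have Pu2 : ct P *m P = 1%:M := mulmx1C Pu.
exists P => //.
pose T t := P *m M t *m ct P.
have TJ t : ct (T t) = T (- t).
  by rewrite /T !trmx_mul !map_mxM trmxCK MJ mulmxA.
have Toff t (i j : 'I_N) : i != j -> T t i j = 0.
  move=> hij; case: (ltngtP i j) => h.
  - exact: Ptrig.
  - have := Ptrig (- t) j i h; rewrite -/(T (- t)) -TJ !mxE => /eqP.
    by rewrite conjC_eq0 => /eqP.
  - by move: hij; rewrite (val_inj h) eqxx.
have TD s t : T (s + t) = T s *m T t.
  by rewrite /T MD !mulmxA -[P *m M s *m ct P *m P]mulmxA Pu2 mulmx1.
have T0 : T 0 = 1%:M by rewrite /T M0 mulmx1 Pu.
have TP t : P *m M t = T t *m P by rewrite /T -!mulmxA Pu2 mulmx1.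
pose chi j t := T t j j.
have chiD j s t : chi j (s + t) = chi j s * chi j t.
  rewrite /chi TD mxE (bigD1 j) //= big1 ?addr0 // => k hk.
  by rewrite Toff ?mul0r // eq_sym.
have chi0 j : chi j 0 = 1 by rewrite /chi T0 mxE eqxx.
have chiJ j t : chi j t * (chi j t)^* = 1.
  have -> : (chi j t)^* = chi j (- t) by rewrite /chi -TJ !mxE.
  by rewrite -chiD subrr chi0.
have chiC j : continuous (chi j).
  have -> : chi j = fun t => \sum_(k < N) (\sum_(l < N) P j l * c (t + (at_ k - at_ l))) * (ct P) k j.
    apply: funext => t; rewrite /chi /T mxE; apply: eq_bigr => k _.
    rewrite mxE; congr (_ * _); apply: eq_bigr => l _.
    by rewrite mxE addrA.
  apply: continuous_sumf => k; apply: contMc.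
  apply: (@continuous_sumf R 'rV[R]_n 'I_N (index_enum 'I_N) (fun l t => P j l * c (t + (at_ k - at_ l)))) => l.
  apply: contcM; exact: ccont.
have hex : forall j, exists l, forall t, chi j t = e_ l t.
  move=> j; exact: (charN (chiC j) (chiD j) (chiJ j)).
have [lam hlam] := boolp.choice hex.
have row j i t : \sum_(b < N) P j b * M t b i = chi j t * P j i.
  have := congr1 (fun X : 'M[CC R]_N => X j i) (TP t); rewrite !mxE => ->.
  rewrite (bigD1 j) //= big1 ?addr0 // => k hk.
  by rewrite Toff ?mul0r // eq_sym.
exists lam => j i i'.
have h1 := row j i 0; have h2 := row j i' (at_ i - at_ i').
rewrite chi0 mul1r in h1; rewrite hlam in h2.
rewrite -h1 -h2; apply: eq_bigr => b _; rewrite !mxE; congr (_ * c _).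
by rewrite add0r subrK.
Qed.


Lemma at_surj a : a \in A -> exists i, a = at_ i.
Proof.
move=> ha; have hi : (index a (enum_fset A) < N)%N by rewrite index_mem.
by exists (Ordinal hi); rewrite /at_ /= nth_index.
Qed.

Lemma L2dotE (f g : 'rV[R]_n -> CC R) :
  L2dot A f g = (N%:R)^-1 * \sum_(i < N) f (at_ i) * (g (at_ i))^*.
Proof. by rewrite /L2dot sumA. Qed.

Lemma dir2 : spectral A.
Proof.
have [P Pu [lam hlam]] := key2.
have Pu2 : ct P *m P = 1%:M := mulmx1C Pu.
pose E j i := e_ (lam j) (at_ i).
pose ka j := (e_ (lam j) (at_ j))^* * P j j.
have hP j i : P j i = E j i * ka j by rewrite (hlam j i j) eB /E /ka mulrA.
pose S j k := \sum_(i < N) E j i * (E k i)^*.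
have hS j k : ka j * (ka k)^* * S j k = (j == k)%:R.
  have := congr1 (fun X : 'M[CC R]_N => X j k) Pu; rewrite !mxE => <-.
  rewrite /S mulr_sumr; apply: eq_bigr => i _; rewrite !mxE !hP; set K1 := ka j; set K2 := ka k; rewrite [in RHS]rmorphM.
  by ring.
have SN j : S j j = N%:R.
  rewrite /S (eq_bigr (fun=> 1)); last by move=> i _; rewrite /E eJ.
  by rewrite sumr_const card_ord.
have N0 (j : 'I_N) : (N%:R : CC R) != 0.
  by rewrite pnatr_eq0 -lt0n; apply: leq_ltn_trans (ltn_ord j).
have ka0 j : ka j != 0.
  apply/eqP => h; have := hS j j; rewrite h !mul0r eqxx => /eqP.
  by rewrite eq_sym oner_eq0.
have Sjk j k : j != k -> S j k = 0.
  move=> hjk; have := hS j k; rewrite (negbTE hjk) => /eqP.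
  rewrite mulf_eq0 => /orP [|/eqP //].
  by rewrite mulf_eq0 conjC_eq0 => /orP [] h; [move: (ka0 j) | move: (ka0 k)]; rewrite h.
have linj : injective lam.
  move=> j k hjk; apply/eqP; apply/negPn/negP => hne.
  have := Sjk j k hne; rewrite /S /E hjk -/(S k k) SN => /eqP.
  by rewrite (negbTE (N0 j)).
exists (fun l => exists j, l = lam j); split; [|split].
- move=> l [j ->]; rewrite L2dotE -/(S j j) SN mulVf ?oner_neq0 //; exact: N0 j.
- move=> l l' [j ->] [k ->] hne.
  rewrite L2dotE -/(S j k) Sjk ?mulr0 //.
  by apply: contraNneq hne => ->.
move=> f.
pose d j := (\sum_(b < N) f (at_ b) * (P j b)^*) * ka j.
exists [seq lam j | j <- enum 'I_N].
exists (fun l => \sum_(j < N) (l == lam j)%:R * d j).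
split.
  by move=> l /mapP [j _ ->]; exists j.
move=> a /at_surj [i ->].
rewrite big_map big_enum /=.
transitivity (\sum_(j < N) d j * E j i).
  transitivity (\sum_(b < N) f (at_ b) * (ct P *m P) b i).
    by rewrite Pu2 (bigD1 i) //= big1 ?addr0 => [|b hb]; rewrite !mxE ?eqxx ?mulr1 // (negbTE hb) mulr0.
  rewrite (eq_bigr (fun b => \sum_(j < N) f (at_ b) * ((P j b)^* * P j i))); last first.
    by move=> b _; rewrite !mxE mulr_sumr; apply: eq_bigr => j _; rewrite !mxE.
  rewrite exchange_big /=; apply: eq_bigr => j _.
  rewrite /d !mulr_suml; apply: eq_bigr => b _; rewrite (hP j i); ring.
apply: eq_bigr => j _.
congr (_ * _).
rewrite (bigD1 j) //= eqxx mul1r big1 ?addr0 // => k hk.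
by rewrite (inj_eq linj) eq_sym (negbTE hk) mul0r.
Qed.

End Dir2.

Theorem theorem2p7 (R : realType) (n : nat) (A : {fset 'rV[R]_n}) :
  spectral A <->
  exists c : 'rV[R]_n -> CC R,
    continuous c /\
    (forall a a', a \in A -> a' \in A -> c (a' - a) = (a == a')%:R) /\
    (forall t, c (- t) = (c t)^*) /\
    (forall u1 u2, c (u1 - u2) = \sum_(a <- A) c (u1 + a) * (c (u2 + a))^*).
Proof.
split; first exact: dir1.
by case=> c [hc [hA [hN hI]]]; exact: (dir2 hc hA hN hI).
Qed.
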